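(* Let $\varphi$ be an Orlicz $N$-function with Young–Fenchel transform $\psi$ and let $q_\varphi$ be the generalized inverse of the density of $\varphi$. Let $\{X_{k,n},k,n\ge1\}$ be a double array of independent $\varphi$-subgaussian random variables with $\tau_\varphi(X_{k,n})=1$ for all $k,n$, and set $Y_{m,j}=\max_{1\le k\le m,1\le n\le j}X_{k,n}-\psi^{-1}(\ln(mj))$, $Y^+_{m,j}=\max(Y_{m,j},0)$. Assume: (i) there is a strictly increasing function $\kappa:\mathbb R^+\to\mathbb R^+$ and a constant $C>0$ such that $P(X_{k,n}>x)\ge C\exp(-\kappa(x))$ for all $k,n\ge1$ and $x>0$; (ii) there exist $x_0>0$ and $B,C_1>0$ such that $\exp(-\kappa(x))\ge C_1\exp(-B\psi(x))$ for all $x\ge x_0$; (iii) for some $\varepsilon>0$, $\sup_{x>x_0}\frac{q_\varphi(x+\varepsilon)}{\psi(x)}\le C_2<+\infty$. Then for every $\alpha<2-B(1+C_2\varepsilon)$, $$\sum_{m=1}^\infty\sum_{j=1}^\infty(mj)^{-\alpha}P(Y^+_{m,j}>\varepsilon)=+\infty.$$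
   Context: An Orlicz $N$-function is a continuous even convex function $\varphi:\mathbb R\to\mathbb R$ with $\varphi(0)=0$, increasing on $(0,\infty)$, with $\varphi(x)/x\to0$ as $x\to0$ and $\varphi(x)/x\to+\infty$ as $x\to+\infty$. It can be written $\varphi(x)=\int_0^{|x|}p_\varphi(t)\,dt$ with non-decreasing density $p_\varphi$; its generalized inverse is $q_\varphi(t)=\sup\{u\ge0:p_\varphi(u)\le t\}$. The Young–Fenchel transform is $\psi(x)=\sup_{y\in\mathbb R}(xy-\varphi(y))$, with $\psi(x)=\int_0^{|x|}q_\varphi(t)dt$; $\psi^{-1}$ is the inverse of $\psi$ on $[0,\infty)$. A random variable $X$ is $\varphi$-subgaussian if $EX=0$ and there is a finite $a>0$ with $E\exp(tX)\le\exp(\varphi(at))$ for all $t$; $\tau_\varphi(X)=\inf\{a>0:E\exp(tX)\le\exp(\varphi(at))\ \forall t\}$. *)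

(* Defs.v *)
From HB Require Import structures.
From mathcomp Require Import all_boot all_order all_algebra.
From mathcomp Require Import all_classical all_reals all_analysis.
Set Implicit Arguments. Unset Strict Implicit. Unset Printing Implicit Defensive.
Import Order.TTheory GRing.Theory Num.Def Num.Theory.
Import numFieldNormedType.Exports.
Local Open Scope classical_set_scope.
Local Open Scope ring_scope.

Section Defs.
Variable R : realType.

Definition N_function (phi : R -> R) : Prop :=
  [/\ continuous phi,
      (forall x, phi (- x) = phi x),
      phi 0 = 0 &
  [/\
      (forall x y t, 0 <= t -> t <= 1 ->
          phi (t * x + (1 - t) * y) <= t * phi x + (1 - t) * phi y),
     
      {in `]0, +oo[ &, {homo phi : x y / x < y}},
      ((fun x => phi x / x) @ 0^' --> (0 : R)) &
      ((fun x => phi x / x) @ +oo --> +oo)]].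

Definition is_density (phi p : R -> R) : Prop :=
  (forall u v, 0 <= u -> u <= v -> p u <= p v) /\
  (forall x, (phi x)%:E =
      (\int[@lebesgue_measure R]_(t in `[0%R, `|x|%R]) (p t)%:E)%E).

Definition gen_inv (p : R -> R) (t : R) : R :=
  sup [set u | 0 <= u /\ p u <= t].

Definition young_fenchel (phi : R -> R) (x : R) : R :=
  sup (range (fun y => x * y - phi y)).

(* inverse of psi on [0,+oo) (psi is continuous, strictly increasing from 0
   to +oo there): psi^{-1}(v) = sup {u >= 0 : psi u <= v} *)
Definition inv_pos (psi : R -> R) (v : R) : R :=
  sup [set u | 0 <= u /\ psi u <= v].

Section Prob.
Context d (T : measurableType d) (P : probability T R).

Definition mgf_bound (phi : R -> R) (X : {RV P >-> R}) (a : R) : Prop :=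
  forall t : R, (\int[P]_w (expR (t * X w))%:E <= (expR (phi (a * t)))%:E)%E.

Definition phi_subgaussian (phi : R -> R) (X : {RV P >-> R}) : Prop :=
  ('E_P[X] = 0)%E /\ exists a : R, 0 < a /\ mgf_bound phi X a.

Definition tau_phi (phi : R -> R) (X : {RV P >-> R}) : R :=
  inf [set a | 0 < a /\ mgf_bound phi X a].

Definition mutually_independent (I : eqType) (D : set I)
    (X : I -> {RV P >-> R}) : Prop :=
  forall (s : seq I) (B : I -> set R),
    uniq s -> (forall i, i \in s -> D i) ->
    (forall i, i \in s -> measurable (B i)) ->
    P (\big[setI/setT]_(i <- s) (X i @^-1` B i)) =
    (\prod_(i <- s) P (X i @^-1` B i))%E.

End Prob.
End Defs.

(* max_{1<=k<=m, 1<=n<=j} X k n w  (the seed X 1 1 w is one of the terms) *)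
Definition max_array (R : realType) (f : nat -> nat -> R) (m j : nat) : R :=
  \big[Num.max/f 1%N 1%N]_(1 <= k < m.+1) \big[Num.max/f 1%N 1%N]_(1 <= n < j.+1) f k n.

(* Main.v *)
Require Import Defs.
From HB Require Import structures.
From mathcomp Require Import all_boot all_order all_algebra.
From mathcomp Require Import all_classical all_reals all_analysis.
From mathcomp Require Import ring lra measurable_realfun.
Import Order.TTheory GRing.Theory Num.Def Num.Theory.
Import numFieldNormedType.Exports.
Local Open Scope classical_set_scope.
Local Open Scope ring_scope.


Section PhiPsi.
Variable R : realType.
Variable phi : R -> R.
Hypothesis Nphi : N_function phi.

Lemma phi_ge0 x : 0 <= phi x.
Proof.
case: Nphi => _ ev ph0 [cvx _ _ _].
have := cvx x (-x) (2^-1) _ _.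
have -> : 2^-1 * x + (1 - 2^-1) * - x = 0 by field.
rewrite ev ph0 -mulrDl.
have -> : 2^-1 + (1 - 2^-1) = 1 :> R by field.
rewrite mul1r; apply => //; rewrite ?invr_ge0 ?invf_le1 ?ler0n ?ler1n //.
Qed.

Lemma phi_norm y : phi `|y| = phi y.
Proof.
case: Nphi => _ ev _ _; have [y0|y0] := leP 0 y; first by rewrite ger0_norm.
by rewrite ltr0_norm // ev.
Qed.

Lemma phi_big (A : R) : exists M, forall x, M < x -> A <= phi x / x.
Proof.
case: Nphi => _ _ _ [_ _ _ lim].
move/cvgryPge: lim => /(_ A) [M [Mr HM]].
by exists M.
Qed.

Lemma psi_has_ub (u : R) : has_ubound (range (fun y => u * y - phi y)).
Proof.
have [M HM] := phi_big (`|u| + 1).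
set K := Num.max M 1.
exists (`|u| * K) => _ [y _ <-].
have uy : u * y <= `|u| * `|y| by rewrite -normrM ler_norm.
have [yK|Ky] := leP `|y| K.
  rewrite (le_trans (lerB uy (phi_ge0 y))) // subr0 ler_wpM2l //.
have Mlt : M < `|y| by rewrite (le_lt_trans _ Ky) // le_max lexx.
have := HM _ Mlt; rewrite phi_norm.
have y0 : 0 < `|y| by rewrite (lt_trans _ Ky) // lt_max ltr01 orbT.
rewrite ler_pdivlMr // => H.
have K0 : 0 <= `|u| * K by rewrite mulr_ge0 // le_max ler01 orbT.
nra.
Qed.

Notation psi := (young_fenchel phi).

Lemma psi_ge u y : u * y - phi y <= psi u.
Proof. by apply: ub_le_sup; [exact: psi_has_ub | exists y]. Qed.

Lemma psi_le u b : (forall y, u * y - phi y <= b) -> psi u <= b.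
Proof.
move=> H; apply: ge_sup; first by exists (u * 0 - phi 0), 0.
by move=> _ [y _ <-].
Qed.

Lemma psi0 : psi 0 <= 0.
Proof. by apply: psi_le => y; rewrite mul0r sub0r oppr_le0 phi_ge0. Qed.

Lemma inv_pos_spec v : 0 <= v ->
  [/\ psi (inv_pos psi v) <= v, 0 <= inv_pos psi v &
   forall w, 0 <= w -> psi w <= v -> w <= inv_pos psi v].
Proof.
move=> v0.
set S := [set u | 0 <= u /\ psi u <= v].
have S0 : S 0 by split => //; rewrite (le_trans psi0).
have Sub : has_ubound S.
  exists (v + phi 1) => u [u0 hu].
  have := psi_ge u 1; rewrite mulr1 => h.
  by rewrite -lerBlDr (le_trans h hu).
have ws : forall w, 0 <= w -> psi w <= v -> w <= sup S.
  by move=> w w0 hw; apply: ub_le_sup.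
rewrite /inv_pos -/S; split; last first.
- move=> w w0 hw; exact: ws.
- by apply: ws => //; case: S0.
apply: psi_le => y; rewrite leNgt; apply/negP => H.
set s := sup S in H ws *.
set de := s * y - phi y - v.
have de0 : 0 < de by rewrite /de; lra.
set e := de / (`|y| + 1).
have e0 : 0 < e by rewrite divr_gt0 // ltr_wpDl.
have [u [u0 hu] su] := sup_adherent e0 (conj (ex_intro _ 0 S0) Sub).
have us : u <= s by apply: ws.
have h1 : (s - u) * y <= e * `|y|.
  rewrite (le_trans (ler_norm _)) // normrM ler_wpM2r // ger0_norm;
  have su2 : s - e < u := su; have us2 : u <= s := us; lra.
have h2 : e * `|y| < de.
  rewrite /e mulrAC ltr_pdivrMr ?ltr_wpDl //; nra.
have := psi_ge u y; rewrite /de in h2; lra.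
Qed.

Lemma psi_pos s : 0 < s -> 0 < psi s.
Proof.
move=> s0.
case: Nphi => _ _ _ [_ _ lim0 _].
have H : \forall t \near (0:R)^', phi t / t < s by apply: cvgr_lt lim0 _ s0.
have /nbhs_ballP [e /= e0 He] : nbhs (0:R) (fun t => t != 0 -> phi t / t < s) := H.
set x := e / 2.
have x0 : 0 < x by rewrite divr_gt0.
have : phi x / x < s.
  apply: He => /=; last by rewrite gt_eqF.
  by rewrite /ball /= sub0r normrN gtr0_norm // ltr_pdivrMr //; lra.
rewrite ltr_pdivrMr // => h.
apply: (lt_le_trans _ (psi_ge s x)); lra.
Qed.

End PhiPsi.


Section Dens.
Variable R : realType.
Variable phi p : R -> R.
Hypothesis Dp : is_density phi p.
Local Notation mu := (@lebesgue_measure R).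
Definition pp := fun x => p (Num.max x 0).

Lemma pp_nd : {homo pp : x y / x <= y}.
Proof.
move=> x y xy; apply: Dp.1; first by rewrite le_max lexx orbT.
by rewrite ge_max !le_max xy lexx /= orbT.
Qed.

Lemma mpp (D : set R) : measurable D -> measurable_fun D pp.
Proof. by move=> mD; apply: nondecreasing_measurable => //; exact: pp_nd. Qed.

Lemma phi_intE (x : R) : 0 <= x ->
  (phi x)%:E = (\int[mu]_(t in `[0%R, x]) (pp t)%:E)%E.
Proof.
move=> x0; rewrite Dp.2 ger0_norm //; apply: eq_integral => t.
by rewrite inE /= in_itv /= => /andP[t0 _]; rewrite /pp max_l.
Qed.

Lemma itv_ocfin (a b : R) : (mu `]a, b] < +oo)%E.
Proof.
rewrite lebesgue_measure_itv /=; case: ifP => _; last exact: ltry.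
by rewrite -EFinD ltry.
Qed.

Lemma itv_ocE (a b : R) : a <= b -> mu `]a, b] = (b - a)%:E.
Proof.
move=> ab; rewrite lebesgue_measure_itv /= lte_fin.
have [lt|ge] := ltP a b; first by rewrite EFinD EFinN.
have -> : b = a by apply/eqP; rewrite eq_le ab ge.
by rewrite subrr.
Qed.

Lemma bounded_itv (f : R -> R) (A : set R) (M : R) :
  (forall x, A x -> `|f x| <= M) -> [bounded f x | x in A].
Proof.
move=> H; exists M; split; first by rewrite num_real.
move=> K MK x Ax /=; exact: (le_trans (H x Ax) (ltW MK)).
Qed.

Lemma pp_int (a b : R) : mu.-integrable `]a, b] (EFin \o pp).
Proof.
apply: measurable_bounded_integrable => //; first exact: itv_ocfin.
  exact: mpp.
apply: (@bounded_itv _ _ (`|pp a| + `|pp b|)) => x /=.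
rewrite in_itv /= => /andP[ax xb].
have h1 := @pp_nd a x (ltW ax); have h2 := @pp_nd x b xb.
rewrite ler_norml; apply/andP; split.
  have := ler_norm (pp a); have := ler_norm (- pp a); rewrite normrN.
  have := normr_ge0 (pp b); lra.
have := ler_norm (pp b); have := normr_ge0 (pp a); lra.
Qed.

Lemma cst_int (a b c : R) : mu.-integrable `]a, b] (EFin \o cst c).
Proof.
apply: measurable_bounded_integrable => //; first exact: itv_ocfin.
apply: (@bounded_itv _ _ `|c|) => x /= _; exact: lexx.
Qed.

Lemma phi_split (a b : R) : 0 <= a -> a <= b ->
  (phi b)%:E = ((phi a)%:E + \int[mu]_(t in `]a, b]) (pp t)%:E)%E.
Proof.
move=> a0 ab; rewrite !phi_intE //; last exact: le_trans ab.
rewrite (@itv_bndbnd_setU _ _ (BLeft 0) (BRight a) (BRight b)); last 2 first.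
- by rewrite bnd_simp.
- by rewrite bnd_simp.
rewrite integral_setU //.
- apply/measurable_EFinP; apply: mpp; exact: measurableU.
- apply/disj_setPS => x [] /=; rewrite !in_itv /= => /andP[_ xa] /andP[ax _].
  by move: (lt_le_trans ax xa); rewrite ltxx.
Qed.

Lemma cst_intE (a b c : R) : a <= b ->
  (\int[mu]_(t in `]a, b]) (cst c t)%:E = (c * (b - a))%:E)%E.
Proof.
move=> ab; rewrite (_ : (fun t => (cst c t)%:E) = cst c%:E) //.
by rewrite integral_cst //; move: (@itv_ocE a b ab) => h; rewrite [X in (_ * X)%E]h -EFinM.
Qed.

Lemma phi_lower (a b c : R) : 0 <= a -> a <= b ->
  (forall u, a < u -> u <= b -> c <= p u) -> c * (b - a) <= phi b - phi a.
Proof.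
move=> a0 ab H.
have : ((c * (b - a))%:E <= \int[mu]_(t in `]a, b]) (pp t)%:E)%E.
  rewrite -cst_intE //; apply: le_integral => //; [exact: cst_int|exact: pp_int|].
  move=> x; rewrite inE /= in_itv /= => /andP[ax xb].
  rewrite lee_fin /pp max_l; first exact: H.
  by rewrite ltW // (le_lt_trans a0).
have := @phi_split a b a0 ab.
move: (\int[mu]_(t in _) _)%E => I.
case: I => [r| |] h hI.
- move: hI; rewrite lee_fin; move: h; rewrite -EFinD => -[->]; lra.
- by move: h; rewrite addey.
- by move: h; rewrite addeNy.
Qed.

Lemma phi_upper (a b c : R) : 0 <= a -> a <= b ->
  (forall u, a < u -> u <= b -> p u <= c) -> phi b - phi a <= c * (b - a).
Proof.
move=> a0 ab H.
have : (\int[mu]_(t in `]a, b]) (pp t)%:E <= (c * (b - a))%:E)%E.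
  rewrite -cst_intE //; apply: le_integral => //; [exact: pp_int|exact: cst_int|].
  move=> x; rewrite inE /= in_itv /= => /andP[ax xb].
  rewrite lee_fin /pp max_l; first exact: H.
  by rewrite ltW // (le_lt_trans a0).
have := @phi_split a b a0 ab.
move: (\int[mu]_(t in _) _)%E => I.
case: I => [r| |] h hI.
- move: hI; rewrite lee_fin; move: h; rewrite -EFinD => -[->]; lra.
- by move: h; rewrite addey.
- by move: h; rewrite addeNy.
Qed.

End Dens.


Section L7.
Variable R : realType. Variables phi p : R -> R.
Hypothesis Nphi : N_function phi. Hypothesis Dp : is_density phi p.
Local Notation psi := (young_fenchel phi).

Lemma psi_step (s e : R) : 0 <= s -> 0 < e ->
  psi (s + e) <= psi s + e * gen_inv p (s + e).
Proof.
move=> s0 e0; set c := s + e; set G := [set u | 0 <= u /\ p u <= c].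
have c0 : 0 < c by rewrite /c; lra.
have ph0 : phi 0 = 0 by case: Nphi.
have Gub : has_ubound G.
  have [//|nG] := pselect (has_ubound G); exfalso.
  have pc : forall y, 0 <= y -> p y <= c.
    move=> y y0.
    have [u [[u0 pu] yu]] : exists u, G u /\ y < u.
      apply: contrapT => hn; apply: nG; exists y => u Gu.
      rewrite leNgt; apply/negP => yu; apply: hn; by exists u.
    exact: le_trans (Dp.1 y u y0 (ltW yu)) pu.
  have [M HM] := @phi_big _ _ Nphi (c + 1).
  set x := Num.max M 1 + 1.
  have m1 : 1 <= Num.max M 1 by rewrite le_max lexx orbT.
  have mM : M <= Num.max M 1 by rewrite le_max lexx.
  have x0 : 0 < x by rewrite /x; lra.
  have Mx : M < x by rewrite /x; lra.
  have := HM x Mx; rewrite ler_pdivlMr //.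
  have := @phi_upper R phi p Dp 0 x c (lexx 0) (ltW x0) (fun u h1 h2 => pc u (ltW h1)).
  rewrite ph0 !subr0; nra.
have Q0 : 0 <= gen_inv p c.
  have [[u Gu]|G0] := pselect (G !=set0).
    exact: le_trans Gu.1 (ub_le_sup Gub Gu).
  rewrite /gen_inv -/G (_ : G = set0) ?sup0 //.
  by apply/seteqP; split => // u Gu; apply: G0; exists u.
have Qp : forall u, gen_inv p c < u -> c < p u.
  move=> u Qu; rewrite ltNge; apply/negP => pu.
  have Gu : G u by split => //; rewrite (le_trans Q0) // ltW.
  by move: (ub_le_sup Gub Gu); rewrite /gen_inv -/G leNgt Qu.
set Q := gen_inv p c in Q0 Qp *.
apply: psi_le => // y.
have [yQ|Qy] := leP y Q.
  have := @psi_ge _ _ Nphi s y; have := ler_wpM2l (ltW e0) yQ; rewrite /c; nra.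
have := @phi_lower R phi p Dp Q y c Q0 (ltW Qy) (fun u h1 _ => ltW (Qp u h1)).
have := @psi_ge _ _ Nphi s Q; rewrite /c; nra.
Qed.

End L7.


Section Prob.
Variable R : realType.
Context d (T : measurableType d) (P : probability T R).

Lemma mgf1 (phi : R -> R) (X : {RV P >-> R}) : continuous phi ->
  phi_subgaussian phi X -> tau_phi phi X = 1 -> mgf_bound phi X 1.
Proof.
move=> Cphi [_ [a0 [a0p h0]]] tau1 t.
set A := [set a | 0 < a /\ mgf_bound phi X a].
have An : A !=set0 by exists a0.
have Alb : has_lbound A by exists 0 => a [] /ltW.
have hinf : has_inf A by split.
have h1 : (fun a : R => a * t) @ (1:R) --> 1 * t.
  by apply: cvgMl; exact: cvg_id.
have h2 := cvg_comp _ _ h1 (Cphi _).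
have cg := cvg_comp _ expR h2 (@continuous_expR R (phi (1 * t))).
apply/lee_addgt0Pr => eta eta0.
have H : \forall a \near (1:R), `|expR (phi (1 * t)) - (expR \o (phi \o *%R^~ t)) a| < eta.
  exact: (@cvgr_dist_lt _ R^o _ _ _ _ _ cg _ eta0).
have /nbhs_ballP [de de0 Hde] := H.
have [a Aa aA] := inf_adherent de0 hinf.
have a1 : 1 <= a by rewrite -tau1; exact: ge_inf.
apply: (le_trans (Aa.2 t)).
rewrite -EFinD lee_fin mul1r.
have : `|expR (phi t) - expR (phi (a * t))| < eta.
  rewrite -[in phi t](mul1r t); apply: Hde.
  rewrite /ball /= ltr_norml; rewrite /tau_phi -/A in tau1; rewrite tau1 in aA; apply/andP; split; lra.
rewrite ltr_norml => /andP[h _]; lra.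
Qed.

Lemma tail_ub (phi : R -> R) (X : {RV P >-> R}) (x y : R) :
  mgf_bound phi X 1 -> 0 < y ->
  (P [set w | (x <= X w)%R] <= (expR (phi y - y * x))%:E)%E.
Proof.
move=> hm y0; apply: le_trans (chernoff X x y0) _.
rewrite /mmt_gen_fun.
have := hm y; rewrite mul1r => h.
rewrite expRD EFinM; apply: lee_wpmul2r; first by rewrite lee_fin expR_ge0.
rewrite unlock; under eq_integral => w _ do rewrite /= mulrC. exact: h.
Qed.


Lemma mlt (X : {RV P >-> R}) (x : R) : measurable [set w | (x < X w)%R].
Proof.
have -> : [set w | (x < X w)%R] = X @^-1` `]x, +oo[.
  by apply/seteqP; split => w /=; rewrite in_itv /= andbT.
exact: measurable_funPTI.
Qed.

Lemma mle (X : {RV P >-> R}) (x : R) : measurable [set w | (x <= X w)%R].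
Proof.
have -> : [set w | (x <= X w)%R] = X @^-1` `[x, +oo[.
  by apply/seteqP; split => w /=; rewrite in_itv /= andbT.
exact: measurable_funPTI.
Qed.

Lemma mge (X : {RV P >-> R}) (x : R) : measurable [set w | (X w <= x)%R].
Proof.
have -> : [set w | (X w <= x)%R] = X @^-1` `]-oo, x].
  by apply/seteqP; split => w /=; rewrite in_itv /=.
exact: measurable_funPTI.
Qed.

Lemma B_ge1 (phi : R -> R) (X : {RV P >-> R}) (B c x0 : R) :
  N_function phi -> mgf_bound phi X 1 -> 0 < c ->
  (forall x, x0 <= x -> 0 < x ->
    ((c * expR (- (B * young_fenchel phi x)))%:E <= P [set w | (x < X w)%R])%E) ->
  1 <= B.
Proof.
move=> Nphi hm c0 low.
rewrite leNgt; apply/negP => B1.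
set K := expR 1 / (c * (1 - B)).
have K0 : 0 <= K by rewrite /K divr_ge0 // ?expR_ge0 // mulr_ge0 // ?ltW // subr_gt0.
have p1 := @phi_ge0 _ _ Nphi 1.
have m1 : 1 <= Num.max x0 1 by rewrite le_max lexx orbT.
have m0 : x0 <= Num.max x0 1 by rewrite le_max lexx.
set x := Num.max x0 1 + phi 1 + K + 2.
have x0x : x0 <= x by rewrite /x; lra.
have xpos : 0 < x by rewrite /x; lra.
have psix : x - phi 1 <= young_fenchel phi x.
  by have := @psi_ge _ _ Nphi x 1; rewrite mulr1.
set ps := young_fenchel phi x in psix *.
have [e [y _ <-] ey] : exists2 e, range (fun y => x * y - phi y) e & ps - 1 < e.
  apply: sup_adherent => //; split; last exact: psi_has_ub.
  by exists (x * 0 - phi 0), 0.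
have y0 : 0 < y.
  rewrite ltNge; apply/negP => y0.
  have := @phi_ge0 _ _ Nphi y; have : x * y <= 0 by rewrite mulr_ge0_le0 // ltW.
  rewrite /x in ey psix *; lra.
have up := @tail_ub phi X x y hm y0.
have lw := low x x0x xpos.
have sub : (P [set w | (x < X w)%R] <= P [set w | (x <= X w)%R])%E.
  by apply: le_measure; rewrite ?inE; [exact: mlt|exact: mle|move=> w /= /ltW].
have := le_trans lw (le_trans sub up); rewrite lee_fin => h1.
have h2 : expR (phi y - y * x) < expR (1 - ps) by rewrite ltr_expR; lra.
have h3 : c * expR ((1 - B) * ps) < expR 1.
  have := lt_le_trans (le_lt_trans h1 h2) (lexx _).
  move=> h; have := ltr_pM2r (expR_gt0 ps) => hh.
  rewrite -hh in h; rewrite -mulrA -expRD in h.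
  have -> : (1 - B) * ps = - (B * ps) + ps by ring.
  by move: h; rewrite -expRD; have -> : 1 - ps + ps = 1 by ring.
have h4 := expR_ge1Dx ((1 - B) * ps).
have h5 : expR 1 < c * ((1 - B) * ps).
  have : K < ps by move: psix; rewrite /x; lra.
  rewrite /K ltr_pdivrMr ?mulr_gt0 // ?subr_gt0 // => h.
  by rewrite mulrA (mulrC c); lra.
have : c * (1 + (1 - B) * ps) <= c * expR ((1 - B) * ps) by rewrite ler_pM2l.
nra.
Qed.

End Prob.


Section Union.
Variable R : realType.
Context d (T : measurableType d) (P : probability T R).

Lemma in_bigsetI (I : eqType) (s : seq I) (F : I -> set T) w :
  (\big[setI/setT]_(i <- s) F i) w <-> (forall i, i \in s -> F i w).
Proof.
elim: s => [|i s IH]; first by rewrite big_nil; split => // _ i; rewrite in_nil.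
rewrite big_cons; split.
- move=> [Fi /IH H] j; rewrite in_cons => /orP[/eqP->//|]; exact: H.
- move=> H; split; first by apply: H; rewrite mem_head.
  by apply/IH => j js; apply: H; rewrite in_cons js orbT.
Qed.

Lemma prod_le (I : eqType) (s : seq I) (f : I -> \bar R) (c : R) :
  (forall i, i \in s -> (0 <= f i <= c%:E)%E) ->
  (\prod_(i <- s) f i <= (c ^+ size s)%:E)%E.
Proof.
elim: s => [|i s IH] H; first by rewrite big_nil expr0.
rewrite big_cons /= exprS EFinM; apply: lee_pmul.
- by have /andP[] := H i (mem_head _ _).
- rewrite big_seq; apply: prode_ge0 => j js.
  have js' : j \in i :: s by rewrite in_cons js orbT.
  by have /andP[] := H j js'.
- by have /andP[] := H i (mem_head _ _).
- by apply: IH => j js; apply: H; rewrite in_cons js orbT.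
Qed.

Lemma union_lb (X : nat -> nat -> {RV P >-> R}) (m : nat) (t a : R) :
  mutually_independent [set kn : nat * nat | (0 < kn.1)%N /\ (0 < kn.2)%N]
    (fun kn => X kn.1 kn.2) ->
  (forall k, (0 < k)%N -> (a%:E <= P [set w | (t < X k 1%N w)%R])%E) ->
  ((1 - (1 - a) ^+ m)%:E <=
     P [set w | exists2 k, (0 < k <= m)%N & (t < X k 1%N w)%R])%E.
Proof.
move=> ind low.
set s := [seq (k, 1%N) | k <- iota 1 m].
set F := fun i : nat * nat => X i.1 i.2 @^-1` `]-oo, t].
set I := \big[setI/setT]_(i <- s) F i.
have us : uniq s by rewrite map_inj_uniq ?iota_uniq // => x y [].
have sD : forall i, i \in s -> (0 < i.1)%N /\ (0 < i.2)%N.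
  by move=> i /mapP [k]; rewrite mem_iota => /andP[k1 _] -> /=.
have PI : P I = (\prod_(i <- s) P (F i))%E.
  exact: (ind s (fun _ => [set` `]-oo, t]]) us sD (fun _ _ => measurable_itv _)).
have mI : measurable I.
  rewrite /I; apply: big_ind => //; [
    move=> A B mA mB; exact: measurableI|
    move=> i _; exact: measurable_funPTI].
have -> : [set w | exists2 k, (0 < k <= m)%N & (t < X k 1%N w)%R] = ~` I.
  apply/seteqP; split => w /=.
  - move=> [k /andP[k0 km] tX] /in_bigsetI /(_ (k, 1%N)).
    have ks : (k, 1%N) \in s by apply/mapP; exists k => //; rewrite mem_iota k0 add1n ltnS.
    by move=> /(_ ks); rewrite /F /= in_itv /= leNgt tX.
  - move=> nI; apply: contrapT => nE; apply: nI; apply/in_bigsetI => i.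
    move=> /mapP[k]; rewrite mem_iota => /andP[k1 km] ->.
    rewrite /F /= in_itv /= leNgt; apply/negP => tX; apply: nE; exists k => //.
    by rewrite k1 /=; rewrite add1n ltnS in km.
rewrite probability_setC // PI.
have hp : (\prod_(i <- s) P (F i) <= ((1 - a) ^+ size s)%:E)%E.
  apply: prod_le => i ii; apply/andP; split => //.
  have [i1 i2] := sD i ii.
  have -> : F i = ~` [set w | (t < X i.1 i.2 w)%R].
    by apply/seteqP; split => w /=; rewrite /F /= in_itv /= leNgt; [move=> /negP | move=> h; apply/negP].
  rewrite probability_setC; last first.
    have -> : [set w | (t < X i.1 i.2 w)%R] = X i.1 i.2 @^-1` `]t, +oo[.
      by apply/seteqP; split => w /=; rewrite in_itv /= andbT.
    exact: measurable_funPTI.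
  have : i.2 = 1%N by move: ii => /mapP[k _ ->].
  move=> ->; rewrite EFinB; apply: leeB => //; exact: low.
rewrite size_map size_iota in hp.
rewrite EFinB; apply: leeB => //.
Qed.

End Union.


Section Misc.
Variable R : realType.

Lemma gen_inv_ge0 (p : R -> R) t : 0 <= gen_inv p t.
Proof.
rewrite /gen_inv; set G := [set u | 0 <= u /\ p u <= t].
have [hs|hs] := pselect (has_sup G); last by rewrite sup_out.
case: (hs) => [[u Gu] _]; exact: le_trans Gu.1 (sup_upper_bound hs Gu).
Qed.

Lemma pow_bound (a : R) (m : nat) : 0 <= a <= 1 ->
  (1 - a) ^+ m * (1 + m%:R * a) <= 1.
Proof.
move=> /andP[a0 a1]; elim: m => [|m IH]; first by rewrite expr0 mul0r addr0 mulr1.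
rewrite exprS -mulrA.
set q := (1 - a) ^+ m in IH *.
have q0 : 0 <= q by rewrite exprn_ge0 // subr_ge0.
have m0 : 0 <= m%:R :> R by [].
rewrite -natr1.
have h : (1 - a) * (1 + (m%:R + 1) * a) <= 1 + m%:R * a by nra.
have := ler_wpM2l q0 h; rewrite mulrA (mulrC q) -mulrA; lra.
Qed.

Lemma big_max_gt (r : seq nat) (F : nat -> R) (idx t : R) :
  t < \big[Num.max/idx]_(i <- r) F i <-> t < idx \/ exists2 i, i \in r & t < F i.
Proof.
elim: r => [|i r IH]; first by rewrite big_nil; split; [left|case=> // -[]].
rewrite big_cons lt_max; split.
- case/orP => [h|/IH[h|[j jr h]]]; [right; exists i => //; exact: mem_head|by left|].
  by right; exists j => //; rewrite in_cons jr orbT.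
- case => [h|[j]]; first by apply/orP; right; apply/IH; left.
  rewrite in_cons => /orP[/eqP ->|jr] h; first by rewrite h.
  by apply/orP; right; apply/IH; right; exists j.
Qed.

Lemma harm_unb (L : R) : exists n, L < series (@harmonic R) n.
Proof.
apply: contrapT => h; apply: (@dvg_harmonic R).
apply: nondecreasing_is_cvgn.
  move=> x y xy; apply: (@nondecreasing_series _ _ xpredT 0%N) => // n _ _; exact: harmonic_ge0.
exists L => _ [n _ <-]; rewrite leNgt; apply/negP => Ln; apply: h; by exists n.
Qed.

End Misc.


Theorem theorem5 (R : realType) (phi p : R -> R)
  (d : measure_display) (T : measurableType d) (P : probability T R)
  (X : nat -> nat -> {RV P >-> R})
  (kappa : R -> R) (C x0 B C1 eps C2 : R) :
  N_function phi ->
  is_density phi p ->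
  mutually_independent [set kn : nat * nat | (0 < kn.1)%N /\ (0 < kn.2)%N]
    (fun kn => X kn.1 kn.2) ->
  (forall k n, (0 < k)%N -> (0 < n)%N ->
     phi_subgaussian phi (X k n) /\ tau_phi phi (X k n) = 1) ->
  (* (i) *)
  {in `]0, +oo[ &, {homo kappa : x y / x < y}} ->
  (forall x, 0 < x -> 0 <= kappa x) ->
  0 < C ->
  (forall k n x, (0 < k)%N -> (0 < n)%N -> 0 < x ->
     (P [set w | (x < X k n w)%R] >= (C * expR (- kappa x))%:E)%E) ->
  (* (ii) *)
  0 < x0 -> 0 < B -> 0 < C1 ->
  (forall x, x0 <= x ->
     expR (- kappa x) >= C1 * expR (- (B * young_fenchel phi x))) ->
  (* (iii) *)
  0 < eps ->
  (forall x, x0 < x -> gen_inv p (x + eps) / young_fenchel phi x <= C2) ->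
  forall alpha : R, alpha < 2 - B * (1 + C2 * eps) ->
  (\sum_(1 <= m <oo) \sum_(1 <= j <oo)
     (((m * j)%:R `^ (- alpha))%:E *
      P [set w | (eps < Num.max
          (max_array (fun k n => X k n w) m j
             - inv_pos (young_fenchel phi) (ln (m * j)%:R)) 0)%R]))%E
  = +oo%E.
Proof.
move=> Nphi Dp ind sg kmono kpos C0 lowi x00 B0 C10 lowii eps0 iii alpha halpha.
have Cphi : continuous phi by case: Nphi.
set psi := young_fenchel phi in lowii iii *.
set kap := C * C1.
have kap0 : 0 < kap by rewrite mulr_gt0.
have tail : forall k n x, (0 < k)%N -> (0 < n)%N -> x0 <= x -> 0 < x ->
   ((kap * expR (- (B * psi x)))%:E <= P [set w | (x < X k n w)%R])%E.
  move=> k n x k0 n0 xx0 xp; apply: le_trans (lowi k n x k0 n0 xp).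
  by rewrite lee_fin /kap -mulrA ler_pM2l //; exact: lowii.
have [sg1 tau1] := sg 1%N 1%N isT isT.
have hm11 := @mgf1 R d T P phi (X 1%N 1%N) Cphi sg1 tau1.
have B1 : 1 <= B.
  apply: (@B_ge1 R d T P phi (X 1%N 1%N) B kap x0 Nphi hm11 kap0) => x h1 h2.
  exact: tail.
have psi_pos' : forall x, 0 < x -> 0 < psi x := @psi_pos R phi Nphi.
have C2ge0 : 0 <= C2.
  have x01 : x0 < x0 + 1 by lra.
  have h := iii _ x01.
  apply: le_trans h; rewrite divr_ge0 // ?gen_inv_ge0 // ltW //.
  apply: psi_pos'; lra.
set beta := B * (1 + C2 * eps).
have beta1 : 1 <= beta.
  have := mulr_ge0 C2ge0 (ltW eps0); rewrite /beta; nra.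
set c' := kap / (1 + kap).
have c'0 : 0 < c' by rewrite /c' divr_gt0 // ltr_wpDl.
set M0 := (Num.bound (expR (psi (x0 + 1)))).+1.
have key : forall m, (M0 <= m)%N ->
  ((c' / m%:R)%:E <= ((m * 1)%:R `^ (- alpha))%:E *
      P [set w | (eps < Num.max
          (max_array (fun k n => X k n w) m 1
             - inv_pos psi (ln (m * 1)%:R)) 0)%R])%E.
  move=> m Mm; rewrite muln1.
  have m1 : (1 <= m)%N by apply: leq_trans Mm.
  set n := m%:R : R.
  have n1 : 1 <= n by rewrite /n ler1n.
  have n0 : 0 < n by lra.
  have lnn : psi (x0 + 1) <= ln n.
    have h := archi_boundP (expR_ge0 (psi (x0 + 1))).
    have h' : expR (psi (x0 + 1)) <= n.
      apply: ltW; apply: lt_le_trans h _; rewrite /n ler_nat; exact: ltnW.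
    by rewrite -[psi (x0 + 1)]expRK ler_ln ?posrE ?expR_gt0.
  have v0 : 0 <= ln n by rewrite ln_ge0.
  have [hs1 hs2 hs3] := @inv_pos_spec R phi Nphi (ln n) v0.
  rewrite -/psi in hs1 hs2 hs3.
  set s := inv_pos psi (ln n) in hs1 hs2 hs3 *.
  have xs : x0 + 1 <= s by apply: hs3 => //; lra.
  set t := s + eps.
  have st := @psi_step R phi p Nphi Dp s eps hs2 eps0.
  rewrite -/psi -/t in st.
  have ps0 : 0 < psi s by apply: psi_pos'; lra.
  have hQ := iii s (ltac:(lra)).
  rewrite ler_pdivrMr // -/t in hQ.
  have pt : B * psi t <= beta * ln n.
    have h1 := ler_wpM2l (ltW eps0) hQ.
    have h2 := mulr_ge0 C2ge0 (ltW eps0).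
    have h4 := ler_wpM2r h2 hs1.
    have h3 : psi t <= ln n * (1 + C2 * eps) by lra.
    have := ler_wpM2l (ltW B0) h3; rewrite /beta; lra.
  set a := kap * n `^ (- beta).
  have na : n `^ (- beta) = expR (- beta * ln n) by rewrite /powR gt_eqF.
  have aP : forall k, (0 < k)%N -> (a%:E <= P [set w | (t < X k 1%N w)%R])%E.
    move=> k k0; apply: le_trans (tail k 1%N t k0 isT _ _); last 2 first.
    - rewrite /t; lra.
    - rewrite /t; lra.
    by rewrite lee_fin /a ler_pM2l // na ler_expR; lra.
  have a0 : 0 <= a by rewrite /a mulr_ge0 // ?powR_ge0 // ltW.
  have a1 : a <= 1.
    have := le_trans (aP 1%N isT) (probability_le1 P (@mlt R d T P (X 1%N 1%N) t)).
    by rewrite lee_fin.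
  have U := @union_lb R d T P X m t a ind aP.
  have -> : [set w | (eps < Num.max (max_array (fun k n0 => X k n0 w) m 1 - s) 0)%R] =
      [set w | exists2 k, (0 < k <= m)%N & (t < X k 1%N w)%R].
    apply/seteqP; split => w /=.
    - rewrite lt_max /max_array => /orP[h|]; last by rewrite ltNge (ltW eps0).
      have : t < \big[Num.max/X 1%N 1%N w]_(1 <= k < m.+1)
                  \big[Num.max/X 1%N 1%N w]_(1 <= n0 < 2) X k n0 w.
        rewrite /t; lra.
      move/big_max_gt => [h1|[k kr]]; first by exists 1%N => //; rewrite m1.
      rewrite mem_index_iota in kr.
      move/big_max_gt => [h1|[j jr h2]]; first by exists 1%N => //; rewrite m1.
      rewrite mem_index_iota in jr.
      have j1 : j = 1%N by case/andP: jr => ja jb; apply/eqP; rewrite eqn_leq ja andbT -ltnS.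
      by rewrite j1 in h2; exists k.
    - move=> [k /andP[k0 km] tk]; rewrite lt_max; apply/orP; left.
      have : t < \big[Num.max/X 1%N 1%N w]_(1 <= k < m.+1)
                  \big[Num.max/X 1%N 1%N w]_(1 <= n0 < 2) X k n0 w.
        apply/big_max_gt; right; exists k; first by rewrite mem_index_iota k0 ltnS.
        by apply/big_max_gt; right; exists 1%N.
      rewrite /max_array /t; lra.
  apply: le_trans (lee_wpmul2l _ U); last by rewrite lee_fin powR_ge0.
  rewrite -EFinM lee_fin.
  have pb := @pow_bound R a m (introT andP (conj a0 a1)).
  rewrite -/n in pb.
  set q := (1 - a) ^+ m in pb *.
  have q0 : 0 <= q by rewrite /q exprn_ge0 // subr_ge0.
  set W := n `^ (1 - beta).
  have hW : n * n `^ (- beta) = W.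
    rewrite /W powRD; last by rewrite (gt_eqF n0) implybT.
    by rewrite powRr1 // ltW.
  have W1 : W <= 1.
    have := @ler_powR R n n1 (1 - beta) 0; rewrite powRr0; apply; lra.
  have W0 : 0 <= W by rewrite powR_ge0.
  have ma : n * a = kap * W by rewrite /a mulrCA hW.
  have e1 : 0 <= kap - n * a by rewrite ma; nra.
  have e2 : 0 <= 1 - q by have := mulr_ge0 q0 (mulr_ge0 (ltW n0) a0); nra.
  have r_ge : n * a <= (1 - q) * (1 + kap).
    have := mulr_ge0 e1 e2; nra.
  set A := n `^ (- alpha).
  have A0 : 0 <= A by rewrite powR_ge0.
  have hab : alpha < 2 - beta := halpha.
  have AW : n^-1 <= A * W.
    rewrite /A /W -powRD; last by rewrite (gt_eqF n0) implybT.
    rewrite -powR_inv1 ?(ltW n0) //; have := @ler_powR R n n1 (-1) (- alpha + (1 - beta)); apply; lra.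
  have f1 := ler_wpM2l A0 r_ge.
  have f2 := ler_wpM2l (ltW kap0) AW.
  have ma' : A * (n * a) = A * (kap * W) by rewrite ma.
  rewrite /c' mulrAC ler_pdivrMr ?ltr_wpDl //; nra.
set F := fun m j => (((m * j)%:R `^ (- alpha))%:E *
      P [set w | (eps < Num.max
          (max_array (fun k n => X k n w) m j
             - inv_pos psi (ln (m * j)%:R)) 0)%R])%E.
have F0 : forall m j, (0 <= F m j)%E.
  by move=> m j; rewrite /F mule_ge0 // lee_fin powR_ge0.
have inner0 : forall m, (0 <= \sum_(1 <= j <oo) F m j)%E.
  by move=> m; apply: nneseries_ge0 => j _ _; exact: F0.
have innerge : forall m, (M0 <= m)%N -> ((c' / m%:R)%:E <= \sum_(1 <= j <oo) F m j)%E.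
  move=> m Mm; apply: le_trans (key m Mm) _.
  have := @nneseries_lim_ge R (F m) xpredT 1%N 2 (fun j _ _ => F0 m j).
  by rewrite big_nat1.
apply/eqyP => L L0.
have [N hN] := @harm_unb R (L * M0%:R / c').
apply: le_trans (@nneseries_lim_ge R (fun m => (\sum_(1 <= j <oo) F m j)%E) xpredT 1%N (M0 + N)
   (fun m _ _ => inner0 m)).
have M01 : (1 <= M0)%N by [].
rewrite (@big_cat_nat _ _ _ M0) //= ?leq_addr //.
apply: lee_paddl; first by apply: sume_ge0 => m _; exact: inner0.
apply: (@le_trans _ _ (\sum_(M0 <= m < M0 + N) (c' / m%:R)%:E)%E); last first.
  rewrite !big_nat; apply: lee_sum => i /andP[hi _]; exact: innerge.
rewrite sumEFin lee_fin.
have -> : \sum_(M0 <= i < M0 + N) c' / i%:R = \sum_(0 <= i < N) c' / (i + M0)%:R.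
  by rewrite -{1}[M0]add0n big_addn addKn.
have M0r : 0 < M0%:R :> R by rewrite ltr0n.
apply: (@le_trans _ _ (c' / M0%:R * series (@harmonic R) N)).
  rewrite ltr_pdivrMr // in hN.
  rewrite mulrAC ler_pdivlMr //; lra.
rewrite /series /= mulr_sumr; apply: ler_sum => i _.
rewrite /harmonic /= -mulrA ler_pM2l //.
rewrite -invfM lef_pV2 ?posrE ?mulr_gt0 ?ltr0n ?addn_gt0 ?orbT //.
rewrite -natrM ler_nat mulnS addnC leq_add2l; exact: leq_pmull.
Qed.
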